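(* For every integer $n\ge1$, \[ \sum_{m=1}^{\infty}\frac{(-1)^{m+1}\,2n}{(m+1)(m+2n+1)}H_m=2\ln2\sum_{k=0}^{n-1}\frac{1}{2k+1}-\sum_{j=1}^{2n}\frac1j\sum_{k=1}^{j}\frac{(-1)^{k-1}}{k}. \]
   Context: $H_m=\sum_{j=1}^m 1/j$ is the $m$-th harmonic number. *)

(* Defs.v *)
From Stdlib Require Import Reals Lra Lia.
Open Scope R_scope.

Fixpoint H (m : nat) : R :=
  match m with
  | O => 0
  | S k => H k + / INR (S k)
  end.

Fixpoint altH (j : nat) : R :=
  match j with
  | O => 0
  | S k => altH k + (-1) ^ k / INR (S k)
  end.

Definition term (n m : nat) : R :=
  (-1) ^ (m + 1) * (2 * INR n) / ((INR m + 1) * (INR m + 2 * INR n + 1)) * H m.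

(* Main.v *)
Require Import Defs.
From Stdlib Require Import Reals Lra Lia.
Open Scope R_scope.

Lemma ln_diff_le (x y : R) : 0 < x -> 0 < y -> ln y - ln x <= (y - x) / x.
Proof.
  intros hx hy.
  assert (e : ln y = ln x + ln (y / x)).
  { rewrite <- ln_mult by (try apply Rdiv_lt_0_compat; lra). f_equal. field. lra. }
  assert (h := exp_ineq1_le (ln (y/x))).
  rewrite exp_ln in h by (apply Rdiv_lt_0_compat; lra).
  rewrite e. unfold Rdiv in *. 
  replace ((y - x) * / x) with (y * / x - 1) by (field; lra). lra.
Qed.

Lemma INR2 : INR 2 = 2.
Proof. simpl. ring. Qed.

Lemma H_S k : H (S k) = H k + / INR (S k).
Proof. reflexivity. Qed.
Lemma altH_S k : altH (S k) = altH k + (-1) ^ k / INR (S k).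
Proof. reflexivity. Qed.

Lemma H_bounds (N M : nat) : (1 <= N)%nat ->
  ln (INR (N + M) + 1) - ln (INR N + 1) <= H (N + M) - H N <= ln (INR (N + M)) - ln (INR N).
Proof.
  intros hN. assert (hN' : 1 <= INR N) by (apply (le_INR 1); lia).
  induction M as [|M IH].
  - rewrite Nat.add_0_r. lra.
  - rewrite Nat.add_succ_r. rewrite H_S. rewrite S_INR.
    set (k := INR (N + M)) in *.
    assert (hk : INR N <= k) by (apply le_INR; lia).
    pose proof (ln_diff_le (k+1) (k+1+1)) as A.
    pose proof (ln_diff_le (k+1) k) as B.
    replace ((k + 1 + 1 - (k + 1)) / (k + 1)) with (/ (k+1)) in A by (field; lra).
    replace ((k - (k + 1)) / (k + 1)) with (- / (k+1)) in B by (field; lra).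
    assert (0 < k + 1) by lra. assert (0 < k) by lra.
    specialize (A ltac:(lra) ltac:(lra)). specialize (B ltac:(lra) ltac:(lra)).
    split; lra.
Qed.

Lemma altH_double (N : nat) : altH (2 * N) = H (2 * N) - H N.
Proof.
  induction N as [|N IH].
  - simpl. ring.
  - replace (2 * S N)%nat with (S (S (2 * N))) by lia.
    rewrite !altH_S, !H_S, IH.
    rewrite pow_1_odd, pow_1_even.
    rewrite !S_INR, mult_INR. rewrite INR2.
    assert (0 <= INR N) by apply pos_INR.
    field. lra.
Qed.

Lemma altH_bound (M : nat) : (2 <= M)%nat -> Rabs (altH M - ln 2) <= 2 / INR M.
Proof.
  intros hM.
  assert (key : forall N, (1 <= N)%nat -> Rabs (altH (2*N) - ln 2) <= / (2 * INR N + 1)).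
  { intros N hN. assert (hN' : 1 <= INR N) by (apply (le_INR 1); lia).
    rewrite altH_double.
    destruct (H_bounds N N hN) as [lo hi].
    replace (N + N)%nat with (2 * N)%nat in * by lia.
    rewrite mult_INR in *. rewrite INR2 in *.
    rewrite ln_mult in hi by lra.
    replace (2 * INR N + 1) with ((2 * INR N + 1)) by ring.
    pose proof (ln_diff_le (2 * INR N + 1) (2 * (INR N + 1))) as A.
    rewrite ln_mult in A by lra.
    replace ((2 * (INR N + 1) - (2 * INR N + 1)) / (2 * INR N + 1)) with (/ (2 * INR N + 1)) in A by (field; lra).
    specialize (A ltac:(lra) ltac:(lra)). apply Rabs_le. split; lra. }
  destruct (Nat.Even_or_Odd M) as [[N ->]|[N ->]].
  - assert (hN : (1 <= N)%nat) by lia.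
    eapply Rle_trans. apply key; auto.
    assert (hN' : 1 <= INR N) by (apply (le_INR 1); lia).
    rewrite mult_INR. rewrite INR2.
    apply Rle_trans with (/ (2 * INR N)).
    apply Rinv_le_contravar; lra.
    assert (0 < /(2*INR N)) by (apply Rinv_0_lt_compat; lra). unfold Rdiv. lra.
  - assert (hN : (1 <= N)%nat) by lia.
    assert (hN' : 1 <= INR N) by (apply (le_INR 1); lia).
    replace (2 * N + 1)%nat with (S (2 * N)) by lia.
    rewrite altH_S, pow_1_even.
    specialize (key N hN).
    rewrite S_INR, mult_INR in *. rewrite INR2 in *.
    replace (altH (2 * N) + 1 / (2 * INR N + 1) - ln 2) with ((altH (2*N) - ln 2) + / (2 * INR N + 1)) by (field; lra).
    eapply Rle_trans. apply Rabs_triang.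
    rewrite (Rabs_right (/ _)) by (left; apply Rinv_0_lt_compat; lra).
    replace (2 / (2 * INR N + 1)) with (/ (2 * INR N + 1) + / (2 * INR N + 1)) by (field; lra).
    lra.
Qed.

Lemma cv_of_bound (u : nat -> R) (l C : R) : 0 < C ->
  (forall M, (2 <= M)%nat -> Rabs (u M - l) <= C / INR M) -> Un_cv u l.
Proof.
  intros hC hb eps he.
  destruct (archimed_cor1 (eps / C)) as [N [hN1 hN2]].
  { apply Rdiv_lt_0_compat; lra. }
  exists (N + 2)%nat. intros n hn. unfold Rdist.
  eapply Rle_lt_trans. apply hb. lia.
  assert (hNn : INR N <= INR n) by (apply le_INR; lia).
  assert (hN0 : 0 < INR N) by (apply lt_0_INR; lia).
  apply Rle_lt_trans with (C / INR N).
  unfold Rdiv. apply Rmult_le_compat_l. lra. apply Rinv_le_contravar; lra.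
  apply Rmult_lt_reg_r with (/ C). apply Rinv_0_lt_compat; lra.
  replace (C / INR N * / C) with (/ INR N) by (field; lra). exact hN1.
Qed.

Lemma altH_cv : Un_cv altH (ln 2).
Proof. apply cv_of_bound with 2. lra. apply altH_bound. Qed.

Lemma sum_inv_H (k : nat) : sum_f_R0 (fun i => / INR (S i)) k = H (S k).
Proof. induction k as [|k IH]. simpl. ring.
  replace (sum_f_R0 _ (S k)) with (sum_f_R0 (fun i => / INR (S i)) k + / INR (S (S k))) by reflexivity.
  rewrite IH. reflexivity. Qed.

Lemma H_over_cv : Un_cv (fun N => H (S N) / INR (S N)) 0.
Proof.
  assert (c : Un_cv (fun i => / INR (S i)) 0).
  { apply cv_of_bound with 1. lra. intros M hM. rewrite Rminus_0_r.
    assert (0 < INR M) by (apply lt_0_INR; lia).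
    rewrite Rabs_right by (left; apply Rinv_0_lt_compat; apply lt_0_INR; lia).
    rewrite S_INR. unfold Rdiv. rewrite Rmult_1_l. left. apply Rinv_lt_contravar; nra. }
  pose proof (Cesaro_1 _ _ c) as h.
  pose proof (CV_shift' _ 1 _ h) as h2. simpl in h2.
  intros eps he. destruct (h2 eps he) as [N hN]. exists N. intros n hn.
  specialize (hN n hn). rewrite Nat.add_1_r in hN. simpl pred in hN.
  rewrite sum_inv_H in hN. exact hN.
Qed.

Fixpoint P (a : R) (N : nat) : R :=
  match N with O => 0 | S k => P a k + (-1) ^ k * H (S k) / (INR (S k) + a) end.
Fixpoint Q (a : R) (N : nat) : R :=
  match N with O => 0 | S k => Q a k + (-1) ^ k / (INR (S k) * (INR (S k) + a)) end.

Lemma H_S' k : H (S k) = H k + / INR (S k).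
Proof. reflexivity. Qed.

Lemma PQ (a : R) (N : nat) : 0 < a ->
  P a N + P (a + 1) N = Q a (S N) + (-1) ^ (S N) * H (S N) / (INR (S N) + a).
Proof.
  intros ha. induction N as [|N IH].
  - simpl. field. lra.
  - change (P a (S N)) with (P a N + (-1) ^ N * H (S N) / (INR (S N) + a)).
    change (P (a+1) (S N)) with (P (a+1) N + (-1) ^ N * H (S N) / (INR (S N) + (a+1))).
    change (Q a (S (S N))) with (Q a (S N) + (-1) ^ (S N) / (INR (S (S N)) * (INR (S (S N)) + a))).
    rewrite (H_S' (S N)).
    assert (e : Q a (S N) = P a N + P (a + 1) N - (-1) ^ (S N) * H (S N) / (INR (S N) + a)) by lra.
    rewrite e. clear e IH.
    rewrite (S_INR (S N)). simpl pow.
    assert (0 <= INR N) by apply pos_INR. rewrite S_INR.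
    field. lra.
Qed.

Lemma sq_sign k : (-1) ^ k * (-1) ^ k = 1.
Proof. rewrite <- Rpow_mult_distr. replace (-1 * -1) with 1 by ring. apply pow1. Qed.

Lemma Q_closed (k N : nat) : (1 <= k)%nat ->
  Q (INR k) N = / INR k * (altH N - (-1) ^ k * (altH (N + k) - altH k)).
Proof.
  intros hk. assert (1 <= INR k) by (apply (le_INR 1); lia).
  induction N as [|N IH].
  - simpl. field. lra.
  - change (Q (INR k) (S N)) with (Q (INR k) N + (-1) ^ N / (INR (S N) * (INR (S N) + INR k))).
    rewrite IH. simpl (S N + k)%nat.
    change (altH (S N)) with (altH N + (-1) ^ N / INR (S N)).
    change (altH (S (N + k))) with (altH (N+k) + (-1) ^ (N + k) / INR (S (N + k))).
    rewrite pow_add, !S_INR, plus_INR.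
    assert (0 <= INR N) by apply pos_INR.
    pose proof (sq_sign k).
    assert (E: forall s t A B X, s*(A + t*s/X - B) = s*(A-B) + t*(s*s)/X) by (intros; unfold Rdiv; ring).
    rewrite E, H1. field. lra.
Qed.

Lemma sum_S (f : nat -> R) k : sum_f_R0 f (S k) = sum_f_R0 f k + f (S k).
Proof. reflexivity. Qed.

Lemma tele (f : R -> R) K :
  sum_f_R0 (fun a => (-1)^a * (f (INR a + 1) + f (INR a + 2))) K = f 1 - (-1)^(S K) * f (INR K + 2).
Proof.
  induction K as [|K IH].
  - simpl. replace (0+1) with 1 by ring. replace (0 + 2) with 2 by ring. ring.
  - rewrite sum_S, IH. replace (INR (S K) + 1) with (INR K + 2) by (rewrite S_INR; ring).
    simpl pow. ring.
Qed.

Lemma series_P n N :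
  sum_f_R0 (fun i => term n (S i)) N = P 1 (S N) - P (2 * INR n + 1) (S N).
Proof.
  assert (hn0 : 0 <= INR n) by apply pos_INR.
  induction N as [|N IH].
  - simpl. unfold term. simpl. field. lra.
  - rewrite sum_S, IH.
    change (P 1 (S (S N))) with (P 1 (S N) + (-1) ^ (S N) * H (S (S N)) / (INR (S (S N)) + 1)).
    change (P (2 * INR n + 1) (S (S N))) with (P (2 * INR n + 1) (S N) + (-1) ^ (S N) * H (S (S N)) / (INR (S (S N)) + (2 * INR n + 1))).
    unfold term. replace (S (S N) + 1)%nat with (S (S (S N))) by lia.
    assert (hS : 0 <= INR (S (S N))) by apply pos_INR.
    simpl pow. field. lra.
Qed.

Lemma partial n N : (1 <= n)%nat ->
  sum_f_R0 (fun i => term n (S i)) N =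
  sum_f_R0 (fun a => (-1)^a * (Q (INR (S a)) (S (S N))
      + (-1)^(S (S N)) * H (S (S N)) / (INR (S (S N)) + INR (S a)))) (2*n-1).
Proof.
  intros hn.
  rewrite series_P.
  assert (e : 2 * INR n + 1 = INR (2 * n - 1) + 2).
  { rewrite minus_INR by lia. rewrite mult_INR. simpl. ring. }
  rewrite e.
  replace (P 1 (S N) - P (INR (2 * n - 1) + 2) (S N)) with
    (P 1 (S N) - (-1)^(S (2*n-1)) * P (INR (2 * n - 1) + 2) (S N)).
  2:{ replace (S (2*n-1)) with (2*n)%nat by lia. rewrite pow_1_even. ring. }
  rewrite <- (tele (fun a => P a (S N)) (2*n-1)).
  apply sum_eq. intros a _.
  rewrite S_INR. replace (INR a + 2) with (INR a + 1 + 1) by ring.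
  rewrite PQ by (pose proof (pos_INR a); lra). reflexivity.
Qed.

Lemma cv_const c : Un_cv (fun _ => c) c.
Proof. intros e he. exists O. intros. unfold Rdist. rewrite Rminus_diag, Rabs_R0. lra. Qed.

Lemma cv_ext u v l : (forall n, u n = v n) -> Un_cv u l -> Un_cv v l.
Proof. intros e h eps he. destruct (h eps he) as [N hN]. exists N. intros n hn. rewrite <- e. auto. Qed.

Lemma cv_squeeze0 v w : (forall n, Rabs (v n) <= w n) -> Un_cv w 0 -> Un_cv v 0.
Proof.
  intros hb h eps he. destruct (h eps he) as [N hN]. exists N. intros n hn.
  specialize (hN n hn). specialize (hb n). unfold Rdist in *. rewrite Rminus_0_r in *.
  apply Rle_lt_trans with (Rabs (w n)). eapply Rle_trans. exact hb. apply RRle_abs. exact hN.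
Qed.

Lemma cv_sum K (u : nat -> nat -> R) (l : nat -> R) :
  (forall a, Un_cv (u a) (l a)) -> Un_cv (fun N => sum_f_R0 (fun a => u a N) K) (sum_f_R0 l K).
Proof.
  intros h. induction K as [|K IH].
  - simpl. apply h.
  - simpl. apply CV_plus. exact IH. apply h.
Qed.

Lemma H_nonneg k : 0 <= H k.
Proof.
  induction k as [|k IH]. simpl; lra. rewrite H_S.
  assert (0 < / INR (S k)) by (apply Rinv_0_lt_compat, lt_0_INR; lia). lra.
Qed.

Definition lim_a (a : nat) : R :=
  (-1)^a * (/ INR (S a) * (ln 2 - (-1)^(S a) * (ln 2 - altH (S a))) + 0).

Lemma cv_a (a : nat) :
  Un_cv (fun N => (-1)^a * (Q (INR (S a)) (S (S N))
      + (-1)^(S (S N)) * H (S (S N)) / (INR (S (S N)) + INR (S a)))) (lim_a a).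
Proof.
  unfold lim_a. apply CV_mult. apply cv_const. apply CV_plus.
  - apply cv_ext with (fun N => / INR (S a) * (altH (S (S N)) - (-1) ^ (S a) * (altH (N + (a + 3)) - altH (S a)))).
    { intros N. rewrite Q_closed by lia. do 4 f_equal. f_equal. lia. }
    apply CV_mult. apply cv_const. apply CV_minus.
    + apply cv_ext with (fun N => altH (N + 2)). intros; f_equal; lia.
      apply CV_shift'. apply altH_cv.
    + apply CV_mult. apply cv_const. apply CV_minus.
      apply CV_shift'. apply altH_cv. apply cv_const.
  - apply cv_squeeze0 with (fun N => H (S (S N)) / INR (S (S N))).
    + intros N. assert (hH := H_nonneg (S (S N))).
      assert (hp : 0 < INR (S (S N))) by (apply lt_0_INR; lia).
      assert (hq : 0 <= INR (S a)) by apply pos_INR.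
      unfold Rdiv. rewrite !Rabs_mult, pow_1_abs, Rmult_1_l.
      rewrite Rabs_right by lra. rewrite Rabs_right by (left; apply Rinv_0_lt_compat; lra).
      apply Rmult_le_compat_l. lra. apply Rinv_le_contravar; lra.
    + apply cv_ext with (fun N => H (S (N + 1)) / INR (S (N + 1))).
      intros; rewrite Nat.add_1_r; reflexivity.
      apply CV_shift' with (f := fun N => H (S N) / INR (S N)). apply H_over_cv.
Qed.

Lemma lim_a_simpl a : lim_a a = ((-1)^a + 1) * ln 2 / INR (S a) - / INR (S a) * altH (S a).
Proof.
  unfold lim_a. simpl pow. pose proof (sq_sign a).
  assert (0 < INR (S a)) by (apply lt_0_INR; lia).
  replace ((-1) ^ a * (/ INR (S a) * (ln 2 - -1 * (-1) ^ a * (ln 2 - altH (S a))) + 0))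
    with ((-1) ^ a * / INR (S a) * ln 2 + ((-1)^a * (-1)^a) * / INR (S a) * (ln 2 - altH (S a))) by ring.
  rewrite H. field. lra.
Qed.

Lemma final_sum m :
  sum_f_R0 lim_a (2 * m + 1) =
  2 * ln 2 * sum_f_R0 (fun k => / (2 * INR k + 1)) m
  - sum_f_R0 (fun i => / INR (S i) * altH (S i)) (2 * m + 1).
Proof.
  induction m as [|m IH].
  - simpl. rewrite !lim_a_simpl. simpl. field.
  - replace (2 * S m + 1)%nat with (S (S (2 * m + 1))) by lia.
    rewrite !sum_S, IH, !lim_a_simpl.
    replace (S (2 * m + 1)) with (2 * S m)%nat by lia.
    rewrite pow_1_odd, pow_1_even.
    rewrite !S_INR, !mult_INR, !S_INR. simpl (INR 0).
    assert (0 <= INR m) by apply pos_INR.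
    field; lra.
Qed.

Theorem proposition7 (n : nat) (hn : (1 <= n)%nat) :
  infinite_sum (fun i => term n (S i))
    (2 * ln 2 * sum_f_R0 (fun k => / (2 * INR k + 1)) (n - 1)
     - sum_f_R0 (fun i => / INR (S i) * altH (S i)) (2 * n - 1)).
Proof.
  assert (cv : Un_cv (fun N => sum_f_R0 (fun i => term n (S i)) N) (sum_f_R0 lim_a (2*n-1))).
  { eapply cv_ext. intros N. symmetry. apply partial. exact hn.
    apply cv_sum with (u := fun a N => (-1)^a * (Q (INR (S a)) (S (S N))
      + (-1)^(S (S N)) * H (S (S N)) / (INR (S (S N)) + INR (S a)))).
    apply cv_a. }
  destruct n as [|m]. lia.
  replace (2 * S m - 1)%nat with (2 * m + 1)%nat in * by lia.
  replace (S m - 1)%nat with m by lia.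
  rewrite final_sum in cv. exact cv.
Qed.
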